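(* Let $D_+, D_-$ be a pair of SBP operators of order $q\ge1$ on $[a,b]$ with associated data $H,S,\mathbf{p}_0,\mathbf{p}_n,\mathbf{x}$, and assume it is nullspace consistent, i.e. $\ker D_+=\operatorname{span}\{\mathbf{1}\}$. Let $\tilde D_+ = D_+ + H^{-1}\mathbf{p}_0\mathbf{p}_0^\top$ and let $(\lambda,\mathbf{w})$ be an eigenpair of $\tilde D_+$ (over $\mathbb{C}$) with $\operatorname{Re}(\lambda)=0$. Then $(\mathbf{x}^j)^\top H\mathbf{w} = 0$ for every $j=0,\dots,q$.
   Context: Let $[a,b]$ be an interval with $b>a$ and $n\ge 1$. For $\mathbf{x}\in\mathbb{R}^{n+1}$, $\mathbf{x}^j$ denotes elementwise exponentiation, with $\mathbf{x}^0=\mathbf{1}=(1,\dots,1)^\top$. Matrices $D_+, D_-\in\mathbb{R}^{(n+1)\times(n+1)}$ form a pair of SBP (summation-by-parts) operators of order $q\ge 1$ on $[a,b]$ if there exist matrices $H,S\in\mathbb{R}^{(n+1)\times(n+1)}$ and vectors $\mathbf{p}_0,\mathbf{p}_n,\mathbf{x}\in\mathbb{R}^{n+1}$ such that: (A) $D_\pm \mathbf{x}^j = j\mathbf{x}^{j-1}$, $\mathbf{p}_0^\top\mathbf{x}^j = a^j$, $\mathbf{p}_n^\top \mathbf{x}^j = b^j$ for $j=0,\dots,q$ (with $0\cdot\mathbf{x}^{-1}:=\mathbf{0}$); (B) $H=H^\top$ is positive definite; (C) $HD_+ + D_+^\top H = -\mathbf{p}_0\mathbf{p}_0^\top + \mathbf{p}_n\mathbf{p}_n^\top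 + S$ with $S=S^\top$ positive semidefinite; (D) $HD_+ + D_-^\top H = -\mathbf{p}_0\mathbf{p}_0^\top + \mathbf{p}_n\mathbf{p}_n^\top$; (E) $\mathbf{x}=(x_0,\dots,x_n)^\top$ with $x_i\ne x_j$ for $i\ne j$. *)

(* Defs.v *)
From HB Require Import structures.
From mathcomp Require Import all_boot all_order all_algebra.
From mathcomp Require Import complex.
Set Implicit Arguments. Unset Strict Implicit. Unset Printing Implicit Defensive.
Import Order.TTheory GRing.Theory Num.Theory.
Local Open Scope ring_scope.

Definition xpow (R : ringType) (m : nat) (x : 'cV[R]_m) (j : nat) : 'cV[R]_m :=
  \col_i (x i 0 ^+ j).

Definition sym_mx (R : ringType) (m : nat) (A : 'M[R]_m) : Prop := A^T = A.

Definition posdef_mx (R : numDomainType) (m : nat) (A : 'M[R]_m) : Prop :=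
  sym_mx A /\ forall v : 'cV[R]_m, v != 0 -> 0 < (v^T *m A *m v) 0 0.

Definition psd_mx (R : numDomainType) (m : nat) (A : 'M[R]_m) : Prop :=
  sym_mx A /\ forall v : 'cV[R]_m, 0 <= (v^T *m A *m v) 0 0.

Definition SBP_pair (R : numDomainType) (n q : nat) (a b : R)
    (Dp Dm H S : 'M[R]_n.+1) (p0 pn x : 'cV[R]_n.+1) : Prop :=
  [/\ (forall j, (j <= q)%N ->
         [/\ Dp *m xpow x j = j%:R *: xpow x j.-1,
             Dm *m xpow x j = j%:R *: xpow x j.-1,
             p0^T *m xpow x j = (a ^+ j)%:M &
             pn^T *m xpow x j = (b ^+ j)%:M]),
      posdef_mx H,
      H *m Dp + Dp^T *m H = - (p0 *m p0^T) + pn *m pn^T + S /\ psd_mx S,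
      H *m Dp + Dm^T *m H = - (p0 *m p0^T) + pn *m pn^T &
      injective (fun i : 'I_n.+1 => x i 0)].

Definition nullspace_consistent (R : ringType) (m : nat) (Dp : 'M[R]_m) : Prop :=
  forall v : 'cV[R]_m, Dp *m v = 0 <-> exists c : R, v = c *: const_mx 1.

(* Main.v *)
Require Import Defs.
From HB Require Import structures.
From mathcomp Require Import all_boot all_order all_algebra.
From mathcomp Require Import complex.
From mathcomp Require Import ring lra.
Import Order.TTheory GRing.Theory Num.Theory.
Local Open Scope ring_scope.

Section Aux.
Variable R : rcfType.

Lemma ReD' (x y : R[i]) : complex.Re (x + y) = complex.Re x + complex.Re y.
Proof. by case: x => ? ?; case: y. Qed.
Lemma ImD' (x y : R[i]) : complex.Im (x + y) = complex.Im x + complex.Im y.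
Proof. by case: x => ? ?; case: y. Qed.
Lemma ReM' (a : R) (z : R[i]) : complex.Re (a%:C%C * z) = a * complex.Re z.
Proof. by case: z => x y /=; rewrite mul0r subr0. Qed.
Lemma ImM' (a : R) (z : R[i]) : complex.Im (a%:C%C * z) = a * complex.Im z.
Proof. by case: z => x y /=; rewrite mul0r addr0. Qed.

Lemma mapRe m p (A : 'M[R]_(m,p)) (W : 'M[R[i]]_(p,1)) :
  map_mx (@complex.Re R) (map_mx (fun r : R => r%:C%C) A *m W) = A *m map_mx (@complex.Re R) W.
Proof.
apply/matrixP => i k; rewrite !mxE (big_morph _ ReD' (erefl (complex.Re (0:R[i])))).
by apply: eq_bigr => l _; rewrite !mxE ReM'.
Qed.
Lemma mapIm m p (A : 'M[R]_(m,p)) (W : 'M[R[i]]_(p,1)) :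
  map_mx (@complex.Im R) (map_mx (fun r : R => r%:C%C) A *m W) = A *m map_mx (@complex.Im R) W.
Proof.
apply/matrixP => i k; rewrite !mxE (big_morph _ ImD' (erefl (complex.Im (0:R[i])))).
by apply: eq_bigr => l _; rewrite !mxE ImM'.
Qed.

Lemma eD m n (A B : 'M[R]_(m,n)) i j : (A + B) i j = A i j + B i j.
Proof. by rewrite mxE. Qed.
Lemma eN m n (A : 'M[R]_(m,n)) i j : (- A) i j = - A i j.
Proof. by rewrite mxE. Qed.
Lemma eZ m n a (A : 'M[R]_(m,n)) i j : (a *: A) i j = a * A i j.
Proof. by rewrite mxE. Qed.
Lemma eT m n (A : 'M[R]_(m,n)) i j : (A^T) j i = A i j.
Proof. by rewrite mxE. Qed.
Lemma eM11 (A B : 'M[R]_1) : (A *m B) 0 0 = A 0 0 * B 0 0.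
Proof. by rewrite mxE big_ord1. Qed.
Lemma mx11_0 (A : 'M[R]_1) : A 0 0 = 0 -> A = 0.
Proof. by move=> h; apply/matrixP => i j; rewrite !ord1 h mxE. Qed.


Lemma unit_posdef (m : nat) (H : 'M[R]_m.+1) : posdef_mx H -> H \in unitmx.
Proof.
move=> [_ Hp]; rewrite unitmxE unitfE; apply/det0P => -[v vn0 vH].
have := Hp v^T; rewrite trmx_eq0 => /(_ vn0).
by rewrite trmxK vH mul0mx mxE ltxx.
Qed.

End Aux.

Theorem lemma4 (R : rcfType) (n q : nat) (a b : R)
    (Dp Dm H S : 'M[R]_n.+1) (p0 pn x : 'cV[R]_n.+1)
    (lambda : R[i]) (w : 'cV[R[i]]_n.+1) :
  (1 <= n)%N -> (1 <= q)%N -> a < b ->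
  SBP_pair q a b Dp Dm H S p0 pn x ->
  nullspace_consistent Dp ->
  w != 0 ->
  map_mx (fun r : R => r%:C%C) (Dp + invmx H *m p0 *m p0^T) *m w = lambda *: w ->
  complex.Re lambda = 0 ->
  forall j : nat, (j <= q)%N ->
    (map_mx (fun r : R => r%:C%C) (xpow x j))^T *m map_mx (fun r : R => r%:C%C) H *m w = 0.
Proof.
move=> n1 q1 ab [Hx HH [HS Spsd] HD xinj] NC wn0 Heig Relam j jq.
set Dt := Dp + invmx H *m p0 *m p0^T in Heig.
set u := map_mx (@complex.Re R) w.
set v := map_mx (@complex.Im R) w.
set beta := complex.Im lambda.
have lamE : lambda = Complex 0 beta.
  by rewrite /beta; move: Relam; clear; case: lambda => lr li /= ->.
have Hu : Dt *m u = - beta *: v.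
  rewrite /u -mapRe Heig; apply/matrixP => i k; rewrite !mxE.
  by rewrite lamE; case: (w i k) => wr wi /=; rewrite mul0r; ring.
have Hv : Dt *m v = beta *: u.
  rewrite /v -mapIm Heig; apply/matrixP => i k; rewrite !mxE.
  by rewrite lamE; case: (w i k) => wr wi /=; rewrite mul0r; ring.
have Hsym : H^T = H by case: HH.
have Hunit := @unit_posdef R _ H HH.
have HDt : H *m Dt = H *m Dp + p0 *m p0^T.
  by rewrite /Dt mulmxDr !mulmxA mulmxV // mul1mx.
have E2 : forall y z : 'cV[R]_n.+1,
    (y^T *m (z *m z^T) *m y) 0 0 = ((z^T *m y) 0 0)^+2.
  move=> y z; rewrite mulmxA -(mulmxA _ z^T) eM11 -{1}[z]trmxK -trmx_mul eT.
  by rewrite expr2.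
have Q : forall y : 'cV[R]_n.+1, 2 * (y^T *m H *m Dt *m y) 0 0 =
    ((p0^T *m y) 0 0)^+2 + ((pn^T *m y) 0 0)^+2 + (y^T *m S *m y) 0 0.
  move=> y.
  have E := congr1 (fun M => (y^T *m M *m y) 0 0) HS; simpl in E.
  have E1 : (y^T *m (Dp^T *m H) *m y) 0 0 = (y^T *m (H *m Dp) *m y) 0 0.
    by rewrite -[LHS]eT !trmx_mul !trmxK Hsym !mulmxA.
  rewrite !mulmxDr !mulmxDl !eD mulmxN mulNmx eN !E2 E1 in E.
  rewrite -(mulmxA _ H Dt) HDt mulmxDr mulmxDl eD E2.
  lra.
set huv := (u^T *m H *m v) 0 0.
have QU : (u^T *m H *m Dt *m u) 0 0 = - beta * huv.
  by rewrite -mulmxA Hu -scalemxAr eZ.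
have QV : (v^T *m H *m Dt *m v) 0 0 = beta * huv.
  by rewrite -mulmxA Hv -scalemxAr eZ /huv -[(u^T *m H *m v) 0 0]eT !trmx_mul trmxK Hsym mulmxA.
have Su := Spsd.2 u; have Sv := Spsd.2 v.
have Qu := Q u; have Qv := Q v.
rewrite QU in Qu; rewrite QV in Qv.
have sq0 : forall r : R, r ^+ 2 = 0 -> r = 0 by move=> r /eqP; rewrite sqrf_eq0 => /eqP.
have z1 : (p0^T *m u) 0 0 = 0.
  apply: sq0; have := sqr_ge0 ((p0^T *m u) 0 0); have := sqr_ge0 ((pn^T *m u) 0 0);
  have := sqr_ge0 ((p0^T *m v) 0 0); have := sqr_ge0 ((pn^T *m v) 0 0); lra.
have z2 : (pn^T *m u) 0 0 = 0.
  apply: sq0; have := sqr_ge0 ((p0^T *m u) 0 0); have := sqr_ge0 ((pn^T *m u) 0 0);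
  have := sqr_ge0 ((p0^T *m v) 0 0); have := sqr_ge0 ((pn^T *m v) 0 0); lra.
have z3 : (p0^T *m v) 0 0 = 0.
  apply: sq0; have := sqr_ge0 ((p0^T *m u) 0 0); have := sqr_ge0 ((pn^T *m u) 0 0);
  have := sqr_ge0 ((p0^T *m v) 0 0); have := sqr_ge0 ((pn^T *m v) 0 0); lra.
have z4 : (pn^T *m v) 0 0 = 0.
  apply: sq0; have := sqr_ge0 ((p0^T *m u) 0 0); have := sqr_ge0 ((pn^T *m u) 0 0);
  have := sqr_ge0 ((p0^T *m v) 0 0); have := sqr_ge0 ((pn^T *m v) 0 0); lra.
move/mx11_0: z1 => z1; move/mx11_0: z2 => z2; move/mx11_0: z3 => z3; move/mx11_0: z4 => z4.
have HDt' : H *m Dt = pn *m pn^T - Dm^T *m H.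
  rewrite HDt -[H *m Dp](addrK (Dm^T *m H)) HD.
  by rewrite [LHS]addrC !addrA addrN add0r.
have rec : forall y : 'cV[R]_n.+1, pn^T *m y = 0 -> forall k, (k <= q)%N ->
    (xpow x k)^T *m H *m Dt *m y = - (k%:R *: ((xpow x k.-1)^T *m H *m y)).
  move=> y hy k kq; case: (Hx k kq) => _ hm _ _.
  rewrite -(mulmxA _ H Dt) HDt' mulmxBr mulmxBl.
  have -> : (xpow x k)^T *m (pn *m pn^T) *m y = 0 by rewrite -!mulmxA hy !mulmx0.
  rewrite sub0r; congr (- _).
  by rewrite mulmxA -trmx_mul hm linearZ /= -!scalemxAl.
have RU : forall k, (k <= q)%N ->
    beta *: ((xpow x k)^T *m H *m v) = k%:R *: ((xpow x k.-1)^T *m H *m u).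
  move=> k kq; have := rec u z2 k kq.
  by rewrite -mulmxA Hu -scalemxAr scaleNr => /oppr_inj.
have RV : forall k, (k <= q)%N ->
    beta *: ((xpow x k)^T *m H *m u) = - (k%:R *: ((xpow x k.-1)^T *m H *m v)).
  move=> k kq; have := rec v z4 k kq.
  by rewrite -mulmxA Hv -scalemxAr.
have [b0|bn0] := eqVneq beta 0.
  exfalso; move/negP: wn0; apply.
  have cx : const_mx 1 = xpow x 0 by apply/matrixP => i k; rewrite !mxE expr0.
  have [_ _ hp0 _] := Hx 0%N (leq0n _).
  have kill : forall y : 'cV[R]_n.+1, Dt *m y = 0 -> p0^T *m y = 0 -> y = 0.
    move=> y hy hp; move: hy; rewrite /Dt mulmxDl -(mulmxA _ p0^T) hp mulmx0 addr0.
    move/NC => [c yc]; move: hp; rewrite yc -scalemxAr cx hp0 expr0.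
    move/(congr1 (fun M : 'M[R]_1 => M 0 0)); rewrite eZ !mxE /= mulr1 => ->.
    by rewrite scale0r.
  have u0 : u = 0 by apply: kill => //; rewrite Hu b0 oppr0 scale0r.
  have v0 : v = 0 by apply: kill => //; rewrite Hv b0 scale0r.
  apply/eqP/matrixP => i k.
  have := congr1 (fun M : 'cV[R]_n.+1 => M i k) u0; have := congr1 (fun M : 'cV[R]_n.+1 => M i k) v0.
  rewrite /u /v !mxE; case: (w i k) => wr wi /= -> ->; done.
have canc : forall M : 'M[R]_1, beta *: M = 0 -> M = 0.
  by move=> M /eqP; rewrite scalemx_eq0 (negbTE bn0) /= => /eqP.
have all0 : forall k, (k <= q)%N ->
    (xpow x k)^T *m H *m u = 0 /\ (xpow x k)^T *m H *m v = 0.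
  elim=> [|k IH] kq.
    split; apply: canc; [rewrite RV // | rewrite RU //]; by rewrite scale0r ?oppr0.
  have [IHu IHv] := IH (ltnW kq).
  split; apply: canc; [rewrite RV // | rewrite RU //]; by rewrite /= ?IHu ?IHv scaler0 ?oppr0.
have [cj dj] := all0 j jq.
rewrite map_trmx -map_mxM; apply/matrixP => i k; rewrite !ord1.
have := congr1 (fun M : 'M[R]_1 => M 0 0) (@mapRe R _ _ ((xpow x j)^T *m H) w).
have := congr1 (fun M : 'M[R]_1 => M 0 0) (@mapIm R _ _ ((xpow x j)^T *m H) w).
have mE : forall (f : R[i] -> R) (M : 'M[R[i]]_1), (map_mx f M) 0 0 = f (M 0 0).
  by move=> f M; rewrite mxE.
have zE : (0 : 'M[R]_1) 0 0 = 0 by rewrite mxE.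
have zE' : (0 : 'M[R[i]]_1) 0 0 = 0 by rewrite mxE.
rewrite -/u -/v cj dj /= !mE !zE zE'.
by case: (_ 0 0) => zr zi /= -> ->.
Qed.
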